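(* Let $m\ge 1$ and let $s_1,\dots,s_{2m}$ be positive integers. Put $S=\sum_{i=1}^{2m}s_i$, $s_{\max}=\max_i s_i$, $M=S+1$, $d_i=s_{\max}-s_i$, and $\epsilon=\frac{1}{2M}$. Let $$P_R=\Big\{x\in\mathbb{R}^{2m}:\ 0\le x_i\le 1\ \forall i,\ \sum_{i=1}^{2m}(M+s_i)x_i\le \tfrac12 S+mM+\epsilon,\ \sum_{i=1}^{2m}(M+d_i)x_i\le \tfrac12\sum_{i=1}^{2m}d_i+mM+\epsilon\Big\}.$$ Let $v$ be a vertex of $P_R$ having exactly $2m-1$ coordinates in $\{0,1\}$ (i.e. lying on exactly $2m-1$ of the box constraints $0\le x_i\le 1$), and suppose $|\{i: v_i=1\}|=m-1$. Then $v$ is not degenerate, i.e. at most $2m$ of the $4m+2$ defining inequalities of $P_R$ are active at $v$ (equivalently, the two knapsack inequalities are not both active at $v$).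
   Context: The inequalities $0\le x_i\le1$ are the box constraints; the other two inequalities are the knapsack constraints. A vertex of $P_R$ is degenerate if more than $2m$ of the defining inequalities are active at it. *)

(* Defs.v *)
From HB Require Import structures.
From mathcomp Require Import all_boot all_order all_algebra.
Set Implicit Arguments. Unset Strict Implicit. Unset Printing Implicit Defensive.
Import Order.TTheory GRing.Theory Num.Theory.
Local Open Scope ring_scope.

Section PR.
Variables (R : realFieldType) (m : nat) (s : 'I_(2 * m) -> nat).

Definition sumS : nat := (\sum_(i < 2 * m) s i)%N.
Definition smax : nat := (\max_(i < 2 * m) s i)%N.
Definition bigM : R := (sumS + 1)%:R.
Definition dd (i : 'I_(2 * m)) : nat := (smax - s i)%N.
Definition eps : R := 1 / (2 * bigM).

Definition knap1_lhs (x : 'rV[R]_(2 * m)) : R :=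
  \sum_(i < 2 * m) (bigM + (s i)%:R) * x ord0 i.
Definition knap1_rhs : R := sumS%:R / 2 + m%:R * bigM + eps.
Definition knap2_lhs (x : 'rV[R]_(2 * m)) : R :=
  \sum_(i < 2 * m) (bigM + (dd i)%:R) * x ord0 i.
Definition knap2_rhs : R :=
  (\sum_(i < 2 * m) dd i)%N%:R / 2 + m%:R * bigM + eps.

Definition inPR (x : 'rV[R]_(2 * m)) : Prop :=
  (forall i, 0 <= x ord0 i <= 1) /\
  knap1_lhs x <= knap1_rhs /\ knap2_lhs x <= knap2_rhs.

Definition is_vertex (v : 'rV[R]_(2 * m)) : Prop :=
  inPR v /\
  forall (x y : 'rV[R]_(2 * m)) (t : R), inPR x -> inPR y ->
    0 < t < 1 -> v = t *: x + (1 - t) *: y -> x = v /\ y = v.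

Definition num_active (x : 'rV[R]_(2 * m)) : nat := (
  #|[set i : 'I_(2 * m) | x ord0 i == 0%R]| + #|[set i : 'I_(2 * m) | x ord0 i == 1%R]|
   + (knap1_lhs x == knap1_rhs) + (knap2_lhs x == knap2_rhs))%N.

End PR.

(* Main.v *)
Require Import Defs.
From HB Require Import structures.
From mathcomp Require Import all_boot all_order all_algebra.
From mathcomp Require Import zify ring lra.
Import Order.TTheory GRing.Theory Num.Theory.
Local Open Scope ring_scope.

Theorem lemma2 (R : realFieldType) (m : nat) (s : 'I_(2 * m) -> nat)
  (v : 'rV[R]_(2 * m)) :
  (1 <= m)%N ->
  (forall i, (0 < s i)%N) ->
  is_vertex s v ->
  #|[set i : 'I_(2 * m) | (v ord0 i == 0) || (v ord0 i == 1)]| = (2 * m - 1)%N ->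
  #|[set i : 'I_(2 * m) | v ord0 i == 1]| = (m - 1)%N ->
  (num_active s v <= 2 * m)%N.
Proof.
move=> m1 spos [[box _] _] cZO cO.
set c := v ord0 in box cZO cO *.
set Z := [set i | c i == 0].
set O := [set i | c i == 1] in cO *.
set ZO := [set i | (c i == 0) || (c i == 1)] in cZO *.
have eZO : ZO = Z :|: O by apply/setP => i; rewrite !inE.
have dZO : Z :&: O = set0.
  apply/setP => i; rewrite !inE; apply/negbTE; apply/negP => /andP [/eqP -> /eqP].
  by move/eqP; rewrite eq_sym oner_eq0.
have cZpO : (#|Z| + #|O| = 2 * m - 1)%N.
  by rewrite -cZO eZO cardsU dZO cards0 subn0.
have cC : #|~: ZO| = 1%N.
  have := cardsC ZO; rewrite card_ord cZO; lia.
have [j ej] := cards1P (introT eqP cC).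
have nj : forall i, i != j -> (c i == 0) || (c i == 1).
  move=> i ij; have : i \notin ~: ZO by rewrite ej inE.
  by rewrite inE negbK inE.
have jZO : j \notin ZO by rewrite -in_setC ej set11.
have jO : j \notin O by move: jZO; rewrite !inE negb_or => /andP [].
have cj1 : c j != 1 by move: jO; rewrite inE.
set t := c j.
have tlt1 : t < 1 by have := box j; rewrite -/c -/t => /andP [_]; rewrite le_eqVlt (negbTE cj1).
have split : forall w : 'I_(2 * m) -> R,
    \sum_(i < 2 * m) w i * c i = w j * t + \sum_(i in O) w i.
  move=> w; rewrite (bigD1 j) //=; congr (_ + _).
  rewrite [RHS]big_mkcond [LHS]big_mkcond /=; apply: eq_bigr => i _.
  case: (eqVneq i j) => [->|ij] /=; first by rewrite (negbTE jO).
  rewrite inE; case/orP: (nj i ij) => /eqP ->; rewrite ?mulr0 ?mulr1 //.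
  by rewrite eq_sym oner_eq0.
  by rewrite eqxx.
set S := sumS s; set mx := smax s.
set D := (\sum_(i < 2 * m) dd s i)%N.
set sg := (\sum_(i in O) s i)%N.
set dl := (\sum_(i in O) dd s i)%N.
set k := #|O|.
have mk : m = k.+1 by rewrite /k cO; lia.
have smx : forall i, (s i <= mx)%N by move=> i; exact: leq_bigmax.
have sS : forall i, (s i <= S)%N.
  by move=> i; rewrite /S /sumS (bigD1 i) //= leq_addr.
have mxS : (mx <= S)%N by apply/bigmax_leqP => i _; exact: sS.
have DS : (D + S = 2 * m * mx)%N.
  rewrite /D /S /sumS -big_split /=.
  rewrite (eq_bigr (fun _ => mx)); last by move=> i _; rewrite /dd subnK.
  by rewrite sum_nat_const card_ord mulnC.
have dlsg : (dl + sg = k * mx)%N.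
  rewrite /dl /sg -big_split /=.
  rewrite (eq_bigr (fun _ => mx)); last by move=> i _; rewrite /dd subnK.
  by rewrite sum_nat_const.
have sumO : forall w : 'I_(2 * m) -> nat,
    \sum_(i in O) (@bigM R _ s + (w i)%:R) = k%:R * @bigM R _ s + (\sum_(i in O) w i)%N%:R :> R.
  by move=> w; rewrite big_split /= sumr_const natr_sum mulr_natl.
set sj := s j; set dj := dd s j.
rewrite /num_active -/c -/Z -/O cZpO.
case E1: (knap1_lhs s v == _); case E2: (knap2_lhs s v == _);
  rewrite /= ?addn0 ?addn1; try lia.
exfalso.
move/eqP: E1; move/eqP: E2.
rewrite /knap1_lhs /knap2_lhs /knap1_rhs /knap2_rhs -/c !split !sumO -/sg -/dl -/D.
rewrite /eps /bigM -/S -/sj -/dj.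
set a := (S + 1)%:R : R.
have a0 : a != 0 by rewrite /a pnatr_eq0 addn1.
have apos : 0 < a by rewrite /a ltr0n addn1.
rewrite mk -(addn1 k) natrD mul1r.
move=> e2 e1.
have h1 : (2 * a * a + a * S%:R + 1) = 2 * a * ((a + sj%:R) * t) + 2 * a * sg%:R.
  have -> : (a + sj%:R) * t = S%:R / 2 + (k%:R + 1) * a + (2 * a)^-1 - k%:R * a - sg%:R.
    by rewrite -e1; ring.
  by field; rewrite -[_ + 1](natrD _ S 1) pnatr_eq0 addn1.
have h2 : (2 * a * a + a * D%:R + 1) = 2 * a * ((a + dj%:R) * t) + 2 * a * dl%:R.
  have -> : (a + dj%:R) * t = D%:R / 2 + (k%:R + 1) * a + (2 * a)^-1 - k%:R * a - dl%:R.
    by rewrite -e2; ring.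
  by field; rewrite -[_ + 1](natrD _ S 1) pnatr_eq0 addn1.
set M := (S + 1)%N.
have EN : ((M + dj) * (2 * M * M + M * S + 1) + (M + sj) * 2 * M * dl =
           (M + sj) * (2 * M * M + M * D + 1) + (M + dj) * 2 * M * sg)%N.
  apply/eqP; rewrite -(eqr_nat R) !(natrD, natrM) (_ : S%:R + 1 = a); last by rewrite /a natrD.
  apply/eqP.
  rewrite h1 h2; ring.
have ENr : (M * ((M + dj) * (2 * M + S) + (M + sj) * 2 * dl) + M + dj =
            M * ((M + sj) * (2 * M + D) + (M + dj) * 2 * sg) + M + sj)%N.
  have -> : (M * ((M + dj) * (2 * M + S) + (M + sj) * 2 * dl) + M + dj =
     (M + dj) * (2 * M * M + M * S + 1) + (M + sj) * 2 * M * dl)%N by ring.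
  rewrite EN; ring.
have djM : (dj < M)%N by rewrite /dj /dd /M; have := mxS; lia.
have sjM : (sj < M)%N by rewrite /sj /M; have := sS j; lia.
have ejs : dj = sj.
  clearbody M.
  have := congr1 (modn^~ M) ENr.
  rewrite /= -!addnA ![(M * _)%N]mulnC !modnMDl.
  by rewrite !modnDl !modn_small.
move: e2; rewrite ejs => e2.
have e12 : (2 * sg + D = S + 2 * dl)%N.
  apply/eqP; rewrite -(eqr_nat R) !(natrD, natrM); apply/eqP.
  lra.
have ineq : (S < 2 * sg + 2 * sj)%N.
  rewrite -(ltr_nat R) !(natrD, natrM).
  have hp : 0 < 1 / (2 * a) by rewrite divr_gt0 // mulr_gt0.
  have hs : 0 <= sj%:R :> R by [].
  have : (a + sj%:R) * t < a + sj%:R.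
    by rewrite -[X in _ < X]mulr1 ltr_pM2l // ltr_wpDr.
  lra.
have mxe : (mx = sj + dj)%N by rewrite /dj /dd subnKC // smx.
rewrite mk in DS.
lia.
Qed.
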